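(* There are infinitely many primes $p$ such that there exists a perfect $B[-1,3](p)$ set.
   Context: For a prime $p$, a set $B\subseteq\mathbb{Z}_p$ is a perfect $B[-1,3](p)$ set if every nonzero element of $\mathbb{Z}_p$ has a unique representation $ab \bmod p$ with $a\in\{-1,1,2,3\}$ and $b\in B$ (and $0$ has no such representation); equivalently $B\subseteq\mathbb{Z}_p^\ast$, $|B|=(p-1)/4$, and the sets $\{-b,b,2b,3b\}$, $b\in B$, partition $\mathbb{Z}_p^\ast=\mathbb{Z}_p\setminus\{0\}$. *)

(* Defs.v *)
From HB Require Import structures.
From mathcomp Require Import all_boot all_order all_algebra.
Set Implicit Arguments. Unset Strict Implicit. Unset Printing Implicit Defensive.
Import GRing.Theory.
Local Open Scope ring_scope.

Definition mult_coef (i : 'I_4) : int :=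
  match val i with 0%N => -1 | 1%N => 1 | 2%N => 2 | _ => 3 end.

Definition nrep (p : nat) (B : {set 'F_p}) (x : 'F_p) : nat :=
  #|[set ib : 'I_4 * 'F_p | (ib.2 \in B) && ((mult_coef ib.1)%:~R * ib.2 == x)]|.

Definition perfect_Bm13 (p : nat) (B : {set 'F_p}) : Prop :=
  (forall x : 'F_p, x != 0 -> nrep B x = 1%N) /\ nrep B 0 = 0%N.

(* Main.v *)
Require Import Defs.
From mathcomp Require Import all_boot all_order all_algebra all_field.
From mathcomp Require Import ring zify.
From Stdlib Require Import ZArith Lia.
Delimit Scope nat_scope with N.
Import GRing.Theory.

Module PartA.
Local Open Scope Z_scope.

Definition UZ (x : Z) := x^4 + 86* x^2 - 240* x + 1465.
Definition VZ (x : Z) := 4* x^3 - 20* x^2 + 124* x - 580.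
Definition fZ (x : Z) := UZ x ^ 2 - 6 * VZ x ^ 2.
Definition gZ (x : Z) := 159840 + 78124* x + 16320* x^2 + 1974* x^3 + 480* x^4 + 76* x^5 + x^7.
Definition HZ (l : Z) := 375 + 1468* l + 2264* l^2 + 1912* l^3 + 1396* l^4 + 992* l^5 + 416* l^6 + 128* l^7 + 64* l^8.

Lemma fZ_g (x : Z) : fZ x = 127825 + x * gZ x.
Proof. unfold fZ, UZ, VZ, gZ; ring. Qed.

Lemma fZ_H (l : Z) : fZ (4* l+1) = 640 + 1024 * HZ l.
Proof. unfold fZ, UZ, VZ, HZ; ring. Qed.

Lemma A_main (Kz t : Z) : Kz = 2* t+1 ->
  exists Q Q' w : Z, fZ (127825* 127825* Kz* Kz) = 127825 * Q /\
     Q = 1 + 127825* Kz* Kz* gZ (127825* 127825* Kz* Kz) /\ Q = 128 * Q' /\ Q' = 8* w+5.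
Proof.
intros HK.
set (x := 127825* 127825* Kz* Kz).
set (Q := 1 + 127825* Kz* Kz* gZ x).
assert (E1 : fZ x = 127825 * Q).
{ rewrite fZ_g; unfold Q, x; ring. }
set (l := 4 * 4084807656 * (t* t+t) + 4084807656 + (t* t+t)).
assert (E2 : x = 4* l+1) by (unfold x, l; rewrite HK; ring).
assert (E3 : 127825 * Q = 640 + 1024 * HZ l) by (rewrite <- E1, E2; apply fZ_H).
exists Q, (8 * (270 + 433 * HZ l - 54051 * Q) + 5), (270 + 433 * HZ l - 54051 * Q).
split; [exact E1|]. split; [reflexivity|]. split; [lia|reflexivity].
Qed.

End PartA.
Import PartA.

From mathcomp Require Import ring.

Section NatPart.

Definition Kp (M : nat) : nat := \prod_(i < M) (2 * i + 1)%N.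

Lemma Kp_odd M : odd (Kp M).
Proof.
elim: M => [|M IH]; first by rewrite /Kp big_ord0.
by rewrite /Kp big_ord_recr /= oddM -/(Kp M) IH oddD oddM /=.
Qed.

Lemma Kp_dvd M q : odd q -> (q < 2 * M)%N -> (q %| Kp M)%N.
Proof.
move=> oq lt; have hi : (q./2 < M)%N.
  by move: lt; rewrite -{1}(odd_double_half q) oq -mul2n; lia.
rewrite /Kp (bigD1 (Ordinal hi)) //= dvdn_mulr //.
by rewrite -{1}(odd_double_half q) oq -mul2n addnC.
Qed.

Lemma L8 (x : nat) : (0 < x)%N ->
  (forall q, prime q -> (q %| x)%N -> q %% 4 = 1)%N ->
  (x %% 8 = 1)%N \/ exists q, [/\ prime q, (q %| x)%N & (q %% 8 = 5)%N].
Proof.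
elim: x {-2}x (leqnn x) => [|B IHB] x hx x0 H4.
  by move: x0; rewrite leqn0 in hx; rewrite (eqP hx).
case: (leqP x 1) => [x1|x1].
  by left; have -> : x = 1%N by lia.
have pp : prime (pdiv x) by rewrite pdiv_prime.
have dp : (pdiv x %| x)%N by rewrite pdiv_dvd.
set p := pdiv x in pp dp.
have [y hy] : exists y, x = (y * p)%N by exists (x %/ p); rewrite divnK.
have p1 : (1 < p)%N by rewrite prime_gt1.
have y0 : (0 < y)%N by move: x0; rewrite hy muln_gt0 => /andP[].
have yB : (y <= B)%N.
  have : (y * 2 <= x)%N by rewrite hy leq_mul2l p1 orbT.
  lia.
have h4p := H4 p pp dp.
case: (eqVneq (p %% 8) 5)%N => [p5|p5]; first by right; exists p.
have p81 : (p %% 8 = 1)%N by move: p5 => /eqP; lia.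
have H4y : forall q, prime q -> (q %| y)%N -> (q %% 4 = 1)%N.
  by move=> q pq dq; apply: H4 => //; apply: dvdn_trans dq _; rewrite hy dvdn_mulr.
have [IH|[q [pq dq q5]]] := IHB y yB y0 H4y.
  by left; rewrite hy -modnMm IH p81.
by right; exists q; split => //; rewrite hy dvdn_mulr.
Qed.



End NatPart.

Module PartG.
From Stdlib Require Import Ring.

Lemma fZ_pos (x : Z) : (0 <= x)%Z -> (0 < fZ x)%Z.
Proof.
move=> hx; rewrite fZ_g.
have h2 := Z.pow_nonneg x 2 hx; have h3 := Z.pow_nonneg x 3 hx.
have h4 := Z.pow_nonneg x 4 hx; have h5 := Z.pow_nonneg x 5 hx.
have h7 := Z.pow_nonneg x 7 hx.
have hg : (0 <= gZ x)%Z by rewrite /gZ; lia.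
have := Z.mul_nonneg_nonneg _ _ hx hg; lia.
Qed.

Definition Un (n : nat) := (n*n*n*n + 86 * (n*n) + 1465)%N.
Definition Um (n : nat) := (240 * n)%N.
Definition Vp (n : nat) := (4 * (n*n*n) + 124 * n)%N.
Definition Vm (n : nat) := (20 * (n*n) + 580)%N.

Lemma nat_id (n F : nat) : Z.of_nat F = fZ (Z.of_nat n) ->
  (F + 6 * (Vp n * Vp n + Vm n * Vm n) + 2 * Un n * Um n
   = Un n * Un n + Um n * Um n + 12 * Vp n * Vm n)%N.
Proof.
move=> HF; rewrite /Un /Um /Vp /Vm; zify. rewrite HF /fZ /UZ /VZ. ring.
Qed.



End PartG.
Import PartG.
From mathcomp Require Import ring.

Local Open Scope ring_scope.


Lemma natFp0 (p n : nat) : prime p -> ((n%:R : 'F_p) == 0) = (p %| n)%N.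
Proof.
move=> pp; rewrite -(eqtype.inj_eq (@ord_inj _)) val_Fp_nat //.
Qed.

Lemma natFp_neq0 (p n : nat) : prime p -> (0 < n < p)%N -> (n%:R : 'F_p) != 0.
Proof.
move=> pp /andP[n0 np]; rewrite natFp0 //; apply/negP => /dvdn_leq.
by move=> /(_ n0); rewrite leqNgt np.
Qed.

Lemma cf_val (p : nat) (i : 'I_4) :
  ((mult_coef i)%:~R : 'F_p) = nth 0 [:: -1; 1; 2%:R; 3%:R] i.
Proof.
case: i => [[|[|[|[|i]]]] Hi] //=.
Qed.


Section PC.
Variables (q k : nat) (pq : prime q) (hq : q = (8*k+5)%N).
Variables (j w : 'F_q) (hj : j^+2 = -1) (hw : w^+4 = 6%:R).
Let e := (2*k+1)%N.

Lemma two_neq0 : (2%:R : 'F_q) != 0.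
Proof. apply: natFp_neq0 => //; rewrite hq; lia. Qed.
Lemma three_neq0 : (3%:R : 'F_q) != 0.
Proof. apply: natFp_neq0 => //; rewrite hq; lia. Qed.

Lemma fermat1 (y : 'F_q) : y != 0 -> y ^+ (4 * e) = 1.
Proof.
move=> y0.
have E : #|'F_q| = (4 * e).+1 by rewrite card_Fp // hq /e; lia.
have := expf_card y; rewrite E exprS => H.
by apply: (mulIf y0); rewrite mul1r mulrC.
Qed.

Lemma m1e : (-1 : 'F_q) ^+ e = -1.
Proof. by rewrite -signr_odd /e oddD oddM /= expr1. Qed.


Lemma jneq0 : j != 0.
Proof. apply/eqP=> j0; move: hj; rewrite j0 expr0n /= => /eqP; rewrite eq_sym oppr_eq0 oner_eq0. by []. Qed.

Lemma one_neq_m1 : (1 : 'F_q) != -1.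
Proof.
apply/eqP => H; move: two_neq0; rewrite -[2%:R]/(1 + 1 : 'F_q).
by rewrite {2}H subrr eqxx.
Qed.

Lemma opj_neq0 : 1 + j != 0.
Proof.
apply/eqP => H; have : j = -1 by rewrite -(subr0 j) -H; ring.
move=> jm; move: hj; rewrite jm sqrrN expr1n => /eqP; apply/negP; exact: one_neq_m1.
Qed.

Lemma two_e : (2%:R : 'F_q) ^+ (2 * e) = -1.
Proof.
have H1 : (1 + j) ^+ (4 * e) = 1 by apply: fermat1; exact: opj_neq0.
have H2 : (1 + j) ^+ 2 = 2%:R * j.
  have -> : (1 + j) ^+ 2 = 1 + 2%:R * j + j ^+ 2 by ring.
  rewrite hj; ring.
have H3 : j ^+ (2 * e) = -1 by rewrite exprM hj m1e.
have E : (4 * e = 2 * (2 * e))%N by lia.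
move: H1; rewrite E exprM H2 exprMn H3 => H.
by move: H; rewrite mulrN1 => /eqP; rewrite eqr_oppLR => /eqP.
Qed.


Let eps : 'F_q := 2%:R ^+ e.

Lemma eps2 : eps ^+ 2 = -1.
Proof. by rewrite /eps -exprM mulnC two_e. Qed.

Lemma eps_neq0 : eps != 0.
Proof. apply/eqP => H; move: eps2; rewrite H expr0n /= => /eqP; by rewrite eq_sym oppr_eq0 oner_eq0. Qed.

Lemma wneq0 : w != 0.
Proof.
apply/eqP => H; move: hw; rewrite H expr0n /= => /eqP.
by rewrite eq_sym (natrM _ 2 3) mulf_eq0 (negbTE two_neq0) (negbTE three_neq0).
Qed.

Lemma three_e : 3%:R ^+ e = - eps.
Proof.
have H6 : (6%:R : 'F_q) ^+ e = 1.
  by rewrite -hw -exprM; apply: fermat1; exact: wneq0.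
have H : 3%:R ^+ e * eps = 1 by rewrite /eps -exprMn -natrM mulnC.
have E : eps * - eps = 1 by rewrite mulrN -expr2 eps2 opprK.
have : 3%:R ^+ e * (eps * - eps) = - eps by rewrite mulrA H mul1r.
by rewrite E mulr1.
Qed.

Definition chiv (i : nat) : 'F_q := nth 0 [:: -1; 1; eps; - eps] i.

Lemma chi_cf (i : 'I_4) : ((mult_coef i)%:~R : 'F_q) ^+ e = chiv i.
Proof.
rewrite cf_val; case: i => [[|[|[|[|i]]]] Hi] //=.
- exact: m1e.
- exact: expr1n.
- exact: three_e.
Qed.

Lemma cf_neq0 (i : 'I_4) : ((mult_coef i)%:~R : 'F_q) != 0.
Proof.
rewrite cf_val; case: i => [[|[|[|[|i]]]] Hi]; rewrite /nth.
- by rewrite oppr_eq0 oner_neq0.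
- exact: oner_neq0.
- exact: two_neq0.
- exact: three_neq0.
- by [].
Qed.

Lemma chiv_inj (i i' : 'I_4) : chiv i = chiv i' -> i = i'.
Proof.
have a1 : (1 : 'F_q) == -1 = false by apply/negbTE; exact: one_neq_m1.
have a2 : (eps == 1) = false.
  apply/negbTE/eqP => H; move: eps2; rewrite H expr1n; apply/eqP; exact: one_neq_m1.
have a3 : (eps == -1) = false.
  apply/negbTE/eqP => H; move: eps2; rewrite H sqrrN expr1n; apply/eqP; exact: one_neq_m1.
have a4 : (eps == - eps) = false.
  apply/negbTE/eqP => H.
  have : (2%:R * eps : 'F_q) == 0 by rewrite mulr_natl mulr2n {1}H addNr.
  by rewrite mulf_eq0 (negbTE two_neq0) (negbTE eps_neq0).
have b1 : (- eps == 1) = false by rewrite eqr_oppLR a3.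
have b2 : (- eps == -1) = false by rewrite eqr_opp a2.
have c1 : (-1 == (1 : 'F_q)) = false by rewrite eq_sym a1.
have c2 : (1 == eps) = false by rewrite eq_sym a2.
have c3 : (-1 == eps) = false by rewrite eq_sym a3.
have c4 : (- eps == eps) = false by rewrite eq_sym a4.
have c5 : (1 == - eps) = false by rewrite eq_sym b1.
have c6 : (-1 == - eps) = false by rewrite eq_sym b2.
case: i i' => [[|[|[|[|i]]]] Hi] [[|[|[|[|i']]]] Hi'] //= /eqP;
  rewrite ?(a1,a2,a3,a4,b1,b2,c1,c2,c3,c4,c5,c6) // => _; exact: val_inj.
Qed.

Lemma chi_range (y : 'F_q) : y != 0 -> exists i : 'I_4, y ^+ e = chiv i.
Proof.
move=> y0; set t := y ^+ e.
have t4 : t ^+ 4 = 1 by rewrite /t -exprM mulnC fermat1.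
have : (t - 1) * (t + 1) * (t - eps) * (t + eps) = 0.
  have -> : (t - 1) * (t + 1) * (t - eps) * (t + eps) = t^+4 - t^+2 * (1 + eps^+2) + eps^+2 by ring.
  rewrite t4 eps2; ring.
move/eqP; rewrite !mulf_eq0 -!orbA => /or4P[] /eqP H.
- by exists (Ordinal (isT : (1 < 4)%N)); rewrite /chiv /=; apply/eqP; rewrite -subr_eq0 H.
- by exists (Ordinal (isT : (0 < 4)%N)); rewrite /chiv /=; apply/eqP; rewrite -subr_eq0 opprK H.
- by exists (Ordinal (isT : (2 < 4)%N)); rewrite /chiv /=; apply/eqP; rewrite -subr_eq0 H.
- by exists (Ordinal (isT : (3 < 4)%N)); rewrite /chiv /=; apply/eqP; rewrite -subr_eq0 opprK H.
Qed.

Theorem perfectB : perfect_Bm13 [set x : 'F_q | x ^+ e == 1].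
Proof.
split.
- move=> y y0; have [i0 Hi0] := chi_range y y0.
  rewrite /nrep (_ : [set _ | _] = [set (i0, y / (mult_coef i0)%:~R)]) ?cards1 //.
  apply/setP => [[i b]]; rewrite !inE /= xpair_eqE.
  apply/idP/idP.
  + move=> /andP[/eqP hb /eqP hy].
    have hi : i = i0.
      by apply: chiv_inj; rewrite -chi_cf -Hi0 -hy exprMn hb mulr1.
    subst i; rewrite eqxx /=; apply/eqP; rewrite -hy mulrC mulKf //; exact: cf_neq0.
  + move=> /andP[/eqP -> /eqP ->]; apply/andP; split.
    * rewrite exprMn exprVn Hi0 chi_cf mulfV // -chi_cf; apply: expf_neq0; exact: cf_neq0.
    * by rewrite mulrC mulfVK //; exact: cf_neq0.
- rewrite /nrep (_ : [set _ | _] = set0) ?cards0 //.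
  apply/setP => [[i b]]; rewrite !inE /= mulf_eq0 (negbTE (cf_neq0 i)) /=.
  by case: (b =P 0) => [->|]; rewrite ?andbF // expr0n /e addn1 /=.
Qed.

End PC.


Section PB.
Variables (q : nat) (pq : prime q) (hq : (71 < q)%N).

Lemma cnz {n : nat} : (0 < n)%N -> (n <= 71)%N -> (n%:R : 'F_q) != 0.
Proof. move=> h1 h2; apply: natFp_neq0 => //; apply/andP; split => //; lia. Qed.

Lemma sqr0 (x : 'F_q) : x^+2 = 0 -> x = 0.
Proof. by move/eqP; rewrite expf_eq0 => /andP[_ /eqP]. Qed.

Variable (m : 'F_q).
Let U := m^+4 + 86%:R* m^+2 - 240%:R* m + 1465%:R.
Let V := 4%:R* m^+3 - 20%:R* m^+2 + 124%:R* m - 580%:R.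

Lemma partB : U^+2 - 6%:R * V^+2 = 0 -> exists j w : 'F_q, j^+2 = -1 /\ w^+4 = 6%:R.
Proof.
move=> H0.
have HUV : U^+2 = 6%:R * V^+2 by apply/eqP; rewrite -subr_eq0 H0.
have n2 := cnz (isT : (0 < 2)%N) (isT : (2 <= 71)%N).
have [V0|V0] := eqVneq V 0.
  exfalso.
  have U0 : U = 0 by apply: sqr0; rewrite HUV V0; ring.
  set r2 := 8%:R * m^+2 - 25%:R * m + 219%:R.
  have I1 : 4%:R * U - (m + 5%:R) * V = 40%:R * r2 by rewrite /U /V /r2; ring.
  have R2 : r2 = 0.
    move: I1; rewrite U0 V0 !mulr0 subrr => /eqP; rewrite eq_sym mulf_eq0.
    by rewrite (negbTE (cnz _ _)) //= => /eqP.
  set l := 13%:R * m + 545%:R.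
  have I2 : 16%:R * V - (8%:R * m - 15%:R) * r2 = - (11%:R * l) by rewrite /V /r2 /l; ring.
  have L0 : l = 0.
    move: I2; rewrite V0 R2 mulr0 mulr0 subrr => /eqP; rewrite eq_sym oppr_eq0 mulf_eq0.
    by rewrite (negbTE (cnz _ _)) //= => /eqP.
  have I3 : 169%:R * r2 = l * (104%:R * m - 4685%:R) + 2%:R^+7 * 7%:R^+3 * 59%:R
    by rewrite /r2 /l; ring.
  move: I3; rewrite R2 L0 mulr0 mul0r add0r => /eqP; rewrite eq_sym; apply/negP.
  by rewrite !mulf_neq0 ?expf_neq0 ?n2 ?cnz.
set r := - U / V.
have hr : r^+2 = 6%:R by rewrite /r exprMn sqrrN exprVn HUV mulfK // expf_neq0.
have hUr : U + V * r = 0 by rewrite /r mulNr mulrN mulrC divfK // subrr.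
set X := m^+2 + 29%:R + (2%:R * m - 10%:R) * r.
set Y := 2%:R * m + 2%:R * r.
have hXY : X^+2 + Y^+2 = 0.
  have -> : X^+2 + Y^+2 = U + V * r + (r^+2 - 6%:R) * ((2%:R * m - 10%:R)^+2 + 4%:R)
    by rewrite /X /Y /U /V; ring.
  by rewrite hUr hr subrr mul0r addr0.
have X2 : X^+2 = - Y^+2 by apply/eqP; rewrite -subr_eq0 opprK hXY.
have [Y0|Y0] := eqVneq Y 0.
  exfalso.
  have X0 : X = 0 by apply: sqr0; rewrite X2 Y0 expr0n oppr0.
  have hm : m = - r.
    apply/eqP; rewrite -subr_eq0 opprK; move: Y0; rewrite /Y -mulrDr => /eqP.
    by rewrite mulf_eq0 (negbTE n2).
  have I4 : 71%:R = - (29%:R - r^+2 - 10%:R * r) * (10%:R * r + 29%:R - r^+2)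
                    + (r^+2 - 6%:R) * (r^+2 - 152%:R) by ring.
  have X' : 29%:R - r^+2 - 10%:R * r = 0 by rewrite -X0 /X hm; ring.
  move: I4; rewrite X' hr subrr oppr0 !mul0r addr0 => /eqP.
  by rewrite (negbTE (cnz _ _)).
set j := - X / Y.
have hj : j^+2 = -1.
  rewrite /j exprMn sqrrN exprVn.
  rewrite X2.
  by rewrite mulNr mulfV // expf_neq0.
have hjY : X + j * Y = 0 by rewrite /j !mulNr divfK // subrr.
set a := m + j + r.
set b := 2%:R - r.
have hab : a^+2 - r * b^+2 = X + j * Y + (j^+2 + 1) + (r^+2 - 6%:R) * (5%:R - r)
  by rewrite /a /b /X /Y; ring.
rewrite hjY hj hr !subrr addNr mul0r !addr0 in hab.
have b0 : b != 0.
  apply/eqP => hb; have hr2 : r = 2%:R by apply/eqP; rewrite eq_sym -subr_eq0 -/b hb.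
  move: hr; rewrite hr2 => /eqP; rewrite -subr_eq0.
  have -> : (2%:R : 'F_q)^+2 - 6%:R = - 2%:R by ring.
  by rewrite oppr_eq0 (negbTE n2).
exists j, (a / b); split => //.
have hw2 : (a / b)^+2 = r.
  have ha2 : a^+2 = r * b^+2 by apply/eqP; rewrite -subr_eq0 hab.
  by rewrite exprMn exprVn ha2 mulfK // expf_neq0.
by rewrite (_ : 4 = 2 * 2)%N // exprM hw2 hr.
Qed.

End PB.

Lemma jmod4 (q : nat) (pq : prime q) (q2 : q != 2%N) (j : 'F_q) :
  j ^+ 2 = -1 -> (q %% 4 = 1)%N.
Proof.
move=> hj.
have oq : odd q by case: (even_prime pq) => // h; rewrite h eqxx in q2.
have j0 : j != 0.
  apply/eqP => h; move: hj; rewrite h expr0n /= => /eqP; by rewrite eq_sym oppr_eq0 oner_eq0.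
have [h1|h3] : (q %% 4 = 1 \/ q %% 4 = 3)%N.
  have := odd_double_half q; rewrite oq; lia.
  done.
exfalso.
have E : #|'F_q| = (2 * (2 * (q %/ 4) + 1)).+1%N by rewrite card_Fp //; lia.
have := expf_card j; rewrite E exprS exprM hj -signr_odd oddD oddM /= expr1.
rewrite mulrN1 => /eqP; rewrite eq_sym -subr_eq0 opprK -mulr2n -mulr_natr.
rewrite mulf_eq0 (negbTE j0) /= natFp0 //.
move=> /(dvdn_leq (isT : (0 < 2)%N)) qle.
have := prime_gt1 pq; move: q2 => /eqP; lia.
Qed.

Lemma bridge (q n : nat) (pq : prime q) :
  (Z.of_nat q | fZ (Z.of_nat n))%Z ->
  let m := (n%:R : 'F_q) in
  (m^+4 + 86%:R * m^+2 - 240%:R * m + 1465%:R)^+2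
    - 6%:R * (4%:R * m^+3 - 20%:R * m^+2 + 124%:R * m - 580%:R)^+2 = 0.
Proof.
move=> [k Hk] m.
have hpos := fZ_pos _ (Nat2Z.is_nonneg n).
have q1 := prime_gt1 pq.
have hk : (0 <= k)%Z by nia.
set F := Z.to_nat (fZ (Z.of_nat n)).
have HF : Z.of_nat F = fZ (Z.of_nat n) by rewrite /F Z2Nat.id; lia.
have dF : (q %| F)%N.
  apply/dvdnP; exists (Z.to_nat k); zify; nia.
have F0 : (F%:R : 'F_q) = 0 by apply/eqP; rewrite natFp0.
have := nat_id _ _ HF => /(congr1 (fun t => t%:R : 'F_q)).
rewrite /Un /Um /Vp /Vm !natrD !natrM F0 -/m => /eqP; rewrite -subr_eq0 => /eqP E'.
rewrite -oppr0 -E'; ring.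
Qed.

Lemma one_mul_false (a b : Z) : (1 < b)%Z -> (1 = a * b)%Z -> False.
Proof. move=> h1 h2; have [ha|ha] : (a <= 0 \/ 1 <= a)%Z by lia. all: nia. Qed.

Theorem mainTheorem12 :
  forall N : nat, exists p : nat,
    [/\ (N < p)%N, prime p & exists B : {set 'F_p}, perfect_Bm13 B].
Proof.
move=> N.
set M := (N + 72)%N.
set K := Kp M.
have Kodd := Kp_odd M.
have HK : Z.of_nat K = (2 * Z.of_nat K./2 + 1)%Z.
  have := odd_double_half K; rewrite -/K Kodd -mul2n => h; lia.
have [Q [Q' [w [E1 [E2 [E3 E4]]]]]] := A_main _ _ HK.
set x := (127825 * 127825 * Z.of_nat K * Z.of_nat K)%Z in E1 E2.
have hx : (0 <= x)%Z by rewrite /x; have := Nat2Z.is_nonneg K; nia.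
set n := Z.to_nat x.
have hn : Z.of_nat n = x by rewrite /n Z2Nat.id.
have hf := fZ_pos _ hx.
have hQ : (0 < Q)%Z by lia.
have hw : (0 <= w)%Z by lia.
set P := Z.to_nat Q'.
have HP : Z.of_nat P = Q' by rewrite /P Z2Nat.id; lia.
have P0 : (0 < P)%N by lia.
have P5 : (P %% 8 = 5)%N.
  have : (P = 8 * Z.to_nat w + 5)%N by lia.
  lia.
have Hgood : forall q, prime q -> (q %| P)%N ->
    [/\ (2 * M <= q)%N, q != 2%N & exists j w : 'F_q, j^+2 = -1 /\ w^+4 = 6%:R].
  move=> q pq dq.
  have q1 := prime_gt1 pq.
  have [z hz] : (Z.of_nat q | Q')%Z.
    by case/dvdnP: dq => y hy; exists (Z.of_nat y); lia.
  have q2 : q != 2%N by apply/eqP => h; rewrite h in hz; lia.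
  have oq : odd q by case: (even_prime pq) => // h; rewrite h eqxx in q2.
  have nK : ~~ (q %| K)%N.
    apply/negP => /dvdnP [y hy].
    have e : Z.of_nat K = (Z.of_nat y * Z.of_nat q)%Z by lia.
    have : (1 = (128 * z - 127825 * Z.of_nat y * Z.of_nat K * gZ x) * Z.of_nat q)%Z.
      transitivity (Q - 127825 * Z.of_nat K * Z.of_nat K * gZ x)%Z; first lia.
      rewrite E3 hz e; ring.
    apply: one_mul_false; lia.
  have q2M : (2 * M <= q)%N.
    rewrite leqNgt; apply/negP => lt; move: nK; rewrite Kp_dvd //.
  split => //.
  apply: (partB _ pq _ (n%:R)); first lia.
  apply: (bridge _ n pq).
  rewrite hn; exists (127825 * 128 * z)%Z; rewrite E1 E3 hz; ring.
have H4 : forall q, prime q -> (q %| P)%N -> (q %% 4 = 1)%N.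
  move=> q pq dq; have [_ q2 [j [w' [hj _]]]] := Hgood q pq dq.
  exact: (jmod4 _ pq q2 _ hj).
have [P1|[q [pq dq q5]]] := L8 _ P0 H4.
  by rewrite P1 in P5.
have [q2M q2 [j [w' [hj hw']]]] := Hgood q pq dq.
exists q; split => //; first lia.
exists [set y : 'F_q | y ^+ (2 * (q %/ 8) + 1) == 1].
apply: (perfectB q (q %/ 8) pq _ j w' hj hw').
by rewrite {1}(divn_eq q 8) q5 mulnC.
Qed.
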